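(* Let $n\ge2$, $\epsilon\in(0,1)$, let $Q^0\in\mathbb{S}^n$ with $Q^0_i>0$ for all $i$, let $\widehat{P}\in\mathbb{S}^n$ be fixed (not varying with $p$), take $\mathcal{Q}=\{Q^0\}$, and for each $p$ let $\alpha_{\mathrm{L}}=\alpha_{\mathrm{L}}(p)$ be as defined below. Then $$\alpha_{\mathrm{L}}\le\kappa(\widehat{P}\,\|\,Q^0)\qquad\text{and}\qquad\lim_{p\to\infty}\alpha_{\mathrm{L}}=\kappa(\widehat{P}\,\|\,Q^0).$$
   Context: $\mathbb{S}^n=\{P\in\mathbb{R}^n:\sum_iP_i=1,\ P_i\ge0\}$. $D(P\|Q)=\sum_iP_i\log(P_i/Q_i)$. The separation distance is $\kappa(P\|Q)=\max_{i\in[n]}\left(1-\frac{P_i}{Q_i}\right)$. For $\alpha\in[0,1]$ let $\mathcal{P}(\widehat{P},\alpha)=\{P\in\mathbb{S}^n: P_i\le \widehat{P}_i/(1-\alpha),\ i=1,\dots,n\}$ and $D^*_\alpha=\min_{P\in\mathcal{P}(\widehat{P},\alpha),\,Q\in\mathcal{Q}}D(P\|Q)=\min_{P\in\mathcal{P}(\widehat{P},\alpha)}D(P\|Q^0)$. Define $$\alpha_{\mathrm{L}}=\max\left\{\alpha:\ D^*_\alpha\ \ge\ \frac{1}{p(1-\alpha)}\log\left(\frac1\epsilon\right)+\frac{2n}{p(1-\alpha)}\log\big(p(1-\alpha)+1\big)\right\}.$$ *)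

(* Defs.v *)
From HB Require Import structures.
From mathcomp Require Import all_boot all_order all_algebra.
From mathcomp Require Import all_classical all_reals all_analysis.
Set Implicit Arguments. Unset Strict Implicit. Unset Printing Implicit Defensive.
Import Order.TTheory GRing.Theory Num.Theory.
Import numFieldNormedType.Exports.
Local Open Scope classical_set_scope.
Local Open Scope ring_scope.

Section Defs.
Variables (R : realType) (n : nat).

Definition simplex (P : 'I_n -> R) : Prop :=
  (forall i, 0 <= P i) /\ \sum_(i < n) P i = 1.

(** KL divergence D(P||Q) = sum_i P_i log(P_i/Q_i); note ln 0 = 0 in
    mathcomp-analysis, so terms with P_i = 0 contribute 0 (0 log 0 = 0). *)
Definition KL (P Q : 'I_n -> R) : R := \sum_(i < n) P i * ln (P i / Q i).

Definition kappa (P Q : 'I_n -> R) : R :=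
  sup [set 1 - P i / Q i | i in [set: 'I_n]].

Definition ambig (Phat : 'I_n -> R) (a : R) : set ('I_n -> R) :=
  [set P | simplex P /\ forall i, P i <= Phat i / (1 - a)].

Definition Dstar (Phat Q0 : 'I_n -> R) (a : R) : R :=
  inf [set KL P Q0 | P in ambig Phat a].

Definition rhsL (eps p a : R) : R :=
  (p * (1 - a))^-1 * ln (eps^-1)
  + (2 * n%:R) / (p * (1 - a)) * ln (p * (1 - a) + 1).

(** alpha_L(p) = max{alpha : D*_alpha >= rhs}; alpha ranges over [0,1)
    (at alpha = 1 the rhs is +infinity).  Written as a sup (equal to the max
    when the set is nonempty; sup of the empty set is 0 by convention). *)
Definition alphaL (Phat Q0 : 'I_n -> R) (eps p : R) : R :=
  sup [set a : R | 0 <= a < 1 /\ rhsL eps p a <= Dstar Phat Q0 a].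

End Defs.

(* Main.v *)
Require Import Defs.
From HB Require Import structures.
From mathcomp Require Import all_boot all_order all_algebra.
From mathcomp Require Import all_classical all_reals all_analysis.
From mathcomp Require Import ring lra.
Import Order.TTheory GRing.Theory Num.Theory.
Import numFieldNormedType.Exports.
Local Open Scope classical_set_scope.
Local Open Scope ring_scope.

Lemma ln_sub1 {R : realType} {y : R} : 0 < y -> ln y <= y - 1.
Proof.
move=> y0; have := @le_ln1Dx R (y - 1).
rewrite addrCA subrr addr0; apply; rewrite ltrBrDl; lra.
Qed.

Lemma term_bound {R : realType} {a b : R} : 0 < a -> 0 < b ->
  2 * a ^+ 2 - 2 * a * b <= a ^+ 2 * ln (a ^+ 2 / b ^+ 2).
Proof.
move=> a0 b0.
have ab : a / b \is Num.pos by rewrite posrE divr_gt0.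
have ba : 0 < b / a by rewrite divr_gt0.
have -> : a ^+ 2 / b ^+ 2 = (a / b) * (a / b) by rewrite -expr2 expr_div_n.
rewrite lnM // -[a / b]invf_div lnV ?posrE //.
have h := ln_sub1 ba.
have e : a ^+ 2 * (b / a) = a * b by field; rewrite gt_eqF.
have : a ^+ 2 * ln (b / a) <= a ^+ 2 * (b / a - 1) by rewrite ler_pM2l ?exprn_gt0.
rewrite mulrBr e mulr1.
lra.
Qed.

Lemma term_bound2 {R : realType} {P Q : R} : 0 <= P -> 0 < Q ->
  (Num.sqrt P - Num.sqrt Q) ^+ 2 + (P - Q) <= P * ln (P / Q).
Proof.
move=> P0 Q0.
have sQ : 0 < Num.sqrt Q by rewrite sqrtr_gt0.
have eQ := sqr_sqrtr (ltW Q0).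
have eP := sqr_sqrtr P0.
case: (eqVneq P 0) => [->|Pn0].
  rewrite sqrtr0 mul0r sub0r sqrrN eQ; lra.
have sP : 0 < Num.sqrt P by rewrite sqrtr_gt0 lt_def Pn0.
have := term_bound sP sQ; rewrite eP eQ.
have -> : (Num.sqrt P - Num.sqrt Q) ^+ 2 = P - 2 * Num.sqrt P * Num.sqrt Q + Q.
  by rewrite sqrrB eP eQ; ring.
lra.
Qed.

Lemma KL_lb {R : realType} {n : nat} {P Q : 'I_n -> R} :
  (forall i, 0 <= P i) -> (forall i, 0 < Q i) ->
  \sum_(i < n) P i = 1 -> \sum_(i < n) Q i = 1 ->
  \sum_(i < n) (Num.sqrt (P i) - Num.sqrt (Q i)) ^+ 2 <= KL P Q.
Proof.
move=> P0 Q0 sP sQ.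
have : \sum_(i < n) ((Num.sqrt (P i) - Num.sqrt (Q i)) ^+ 2 + (P i - Q i)) <= KL P Q.
  by apply: ler_sum => i _; apply: term_bound2.
by rewrite big_split /= sumrB sP sQ subrr addr0.
Qed.

Lemma gap_lb {R : realType} {P Q c : R} : 0 < Q -> 0 <= P -> P <= c * Q -> c < 1 ->
  ((1 - c) * Q / (2 * Num.sqrt Q)) ^+ 2 <= (Num.sqrt P - Num.sqrt Q) ^+ 2.
Proof.
move=> Q0 P0 PQ c1.
have sQ : 0 < Num.sqrt Q by rewrite sqrtr_gt0.
have eQ := sqr_sqrtr (ltW Q0).
have eP := sqr_sqrtr P0.
have tP : 0 <= Num.sqrt P by [].
have PleQ : P <= Q by nra.
have ts : Num.sqrt P <= Num.sqrt Q by apply: ler_wsqrtr.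
set s := Num.sqrt Q in sQ eQ ts *; set t := Num.sqrt P in eP tP ts *.
have k0 : 0 <= (1 - c) * Q / (2 * s).
  by apply: divr_ge0; [apply: mulr_ge0|]; lra.
have kd : (1 - c) * Q / (2 * s) <= s - t.
  rewrite ler_pdivrMr; last lra.
  rewrite -eQ -eP in PQ *; nra.
nra.
Qed.

Lemma ln1D_sqrt {R : realType} {s : R} : 0 <= s -> ln (s + 1) <= 2 * Num.sqrt s.
Proof.
move=> s0.
have x0 : 0 < Num.sqrt (s + 1) by rewrite sqrtr_gt0; lra.
have ex : Num.sqrt (s + 1) * Num.sqrt (s + 1) = s + 1 by rewrite -expr2 sqr_sqrtr //; lra.
rewrite -ex lnM ?posrE //.
have := ln_sub1 x0.
have : Num.sqrt (s + 1) <= Num.sqrt s + 1.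
  have u0 : 0 <= Num.sqrt s by [].
  rewrite -(ger0_norm (addr_ge0 u0 ler01)) -sqrtr_sqr; apply: ler_wsqrtr.
  rewrite sqrrD1 sqr_sqrtr //; nra.
lra.
Qed.

Lemma rhs_small {R : realType} (L N d : R) : 0 <= L -> 0 <= N -> 0 < d ->
  exists S, 0 < S /\ forall s, S <= s -> s^-1 * L + N / s * ln (s + 1) <= d.
Proof.
move=> L0 N0 d0.
exists (2 * L / d + (4 * N / d) ^+ 2 + 1); split.
  have : 0 <= 2 * L / d by apply: divr_ge0; lra.
  have := sqr_ge0 (4 * N / d); lra.
move=> s Hs.
have h1 : 0 <= 2 * L / d by apply: divr_ge0; lra.
have h2 := sqr_ge0 (4 * N / d).
have s0 : 0 < s by lra.
have hl := ln1D_sqrt (ltW s0).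
have u0 : 0 < Num.sqrt s by rewrite sqrtr_gt0.
have es : Num.sqrt s ^+ 2 = s by rewrite sqr_sqrtr // ltW.
have hu : 4 * N / d <= Num.sqrt s.
  have k0 : 0 <= 4 * N / d by apply: divr_ge0; lra.
  rewrite -(ger0_norm k0) -sqrtr_sqr; apply: ler_wsqrtr; lra.
have hu' : 4 * N <= d * Num.sqrt s.
  by move: hu; rewrite ler_pdivrMr //; lra.
have hs' : 2 * L <= d * s.
  have : 2 * L / d <= s by lra.
  by rewrite ler_pdivrMr //; lra.
have -> : s^-1 * L + N / s * ln (s + 1) = (L + N * ln (s + 1)) / s.
  by rewrite mulrDl mulrAC [L / s]mulrC.
rewrite ler_pdivrMr //.
rewrite -es in hs' *.
have : N * ln (Num.sqrt s ^+ 2 + 1) <= N * (2 * Num.sqrt s).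
  by rewrite ler_wpM2l // es.
nra.
Qed.

Theorem theorem6 (R : realType) (n : nat) (eps : R) (Q0 Phat : 'I_n -> R) :
  (2 <= n)%N -> 0 < eps < 1 ->
  simplex Q0 -> (forall i, 0 < Q0 i) -> simplex Phat ->
  (forall p : R, 0 < p -> alphaL Phat Q0 eps p <= kappa Phat Q0) /\
  (alphaL Phat Q0 eps p @[p --> +oo] --> kappa Phat Q0).
Proof.
move=> n2 /andP[e0 e1] [Q0ge sQ] Q0pos [Phge sPh].
have n0 : (0 < n)%N by apply: leq_trans n2.
pose i0 : 'I_n := Ordinal n0.
set K := kappa Phat Q0.
set F := [set 1 - Phat i / Q0 i | i in [set: 'I_n]].
have rat0 : forall i, 0 <= Phat i / Q0 i by move=> i; apply: divr_ge0 => //; apply: ltW.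
have hasF : has_sup F.
  split; first by exists (1 - Phat i0 / Q0 i0); exists i0.
  exists 1 => x [i _ <-]; have := rat0 i; lra.
have K1 : forall i, 1 - Phat i / Q0 i <= K.
  by move=> i; apply: sup_upper_bound => //; exists i.
have K2 : K <= 1.
  apply: ge_sup; first by exists (1 - Phat i0 / Q0 i0); exists i0.
  move=> x [i _ <-]; have := rat0 i; lra.
have K3 : forall a', a' < K -> exists j, a' < 1 - Phat j / Q0 j.
  move=> a' Ha'.
  have [x [j _ <-] hx] := @sup_adherent _ F (K - a') (ltac:(by rewrite subr_gt0)) hasF.
  have eK : sup F = K by [].
  exists j; move: hx; rewrite eK; lra.
have K0 : 0 <= K.
  have [i Hi] : exists i, Phat i <= Q0 i.
    apply: contrapT => H.
    have : \sum_(i < n) Q0 i < \sum_(i < n) Phat i.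
      apply: ltr_sum.
        by apply/hasP; exists i0; rewrite ?mem_index_enum.
      move=> i _; rewrite ltNge; apply/negP => h; apply: H; by exists i.
    rewrite sQ sPh; lra.
  apply: (le_trans _ (K1 i)); rewrite subr_ge0 ler_pdivrMr // mul1r //.
have KLge0 : forall P, simplex P -> 0 <= KL P Q0.
  move=> P [Pge sP]; have h := KL_lb Pge Q0pos sP sQ.
  have h2 : 0 <= \sum_(i < n) (Num.sqrt (P i) - Num.sqrt (Q0 i)) ^+ 2.
    by apply: sumr_ge0 => i _; apply: sqr_ge0.
  exact: le_trans h2 h.
have KLQ : KL Q0 Q0 = 0.
  by apply: big1 => i _; rewrite divff ?ln1 ?mulr0 // gt_eqF.
have ambPh : forall a, 0 <= a -> a < 1 -> ambig Phat a Phat.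
  move=> a a0 a1; split => // i.
  rewrite ler_pdivlMr; last lra.
  have := Phge i; nra.
have Dzero : forall a, K <= a -> a < 1 -> Dstar Phat Q0 a <= 0.
  move=> a Ka a1; rewrite /Dstar.
  apply: le_trans (ge_inf _ _) _.
  - by exists 0 => x [P [sP _] <-]; apply: KLge0.
  - exists Q0 => //; split => // i.
    rewrite ler_pdivlMr; last lra.
    have := K1 i; rewrite -subr_le0.
    have : 1 - a <= Phat i / Q0 i by have := K1 i; lra.
    by rewrite ler_pdivlMr // mulrC.
  - by rewrite KLQ.
have rhs_pos : forall p a, 0 < p -> 0 <= a -> a < 1 -> 0 < rhsL n eps p a.
  move=> p a p0 a0 a1; rewrite /rhsL.
  have s0 : 0 < p * (1 - a) by apply: mulr_gt0 => //; lra.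
  have L0 : 0 < ln (eps^-1) by apply: ln_gt0; rewrite invf_gt1.
  have l0 : 0 < ln (p * (1 - a) + 1) by apply: ln_gt0; lra.
  have nn : 0 < (n%:R : R) by rewrite ltr0n.
  apply: addr_gt0; apply: mulr_gt0 => //; first by rewrite invr_gt0.
  by apply: divr_gt0 => //; apply: mulr_gt0.
have Dpos : forall a, 0 <= a -> a < K ->
    exists d, 0 < d /\ d <= Dstar Phat Q0 a.
  move=> a a0 aK.
  have a1 : a < 1 by lra.
  have [j hj] := K3 ((a + K) / 2) ltac:(lra).
  set a' := (a + K) / 2 in hj.
  have aa' : a < a' by rewrite /a'; lra.
  have a'1 : a' < 1 by rewrite /a'; lra.
  set c := (1 - a') / (1 - a).
  have c1 : c < 1 by rewrite /c ltr_pdivrMr; lra.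
  have ec : c * (1 - a) = 1 - a' by rewrite /c divfK // gt_eqF //; lra.
  have Qj := Q0pos j.
  have sq0 : 0 < Num.sqrt (Q0 j) by rewrite sqrtr_gt0.
  exists (((1 - c) * Q0 j / (2 * Num.sqrt (Q0 j))) ^+ 2); split.
    apply: exprn_gt0; apply: divr_gt0; last lra.
    apply: mulr_gt0 => //; lra.
  apply: lb_le_inf; first by exists (KL Phat Q0); exists Phat => //; apply: ambPh.
  move=> x [P [[Pge sP] Pb] <-].
  have hP : P j <= c * Q0 j.
    apply: (le_trans (Pb j)).
    rewrite ler_pdivrMr; last lra.
    have : Phat j / Q0 j < 1 - a' by lra.
    rewrite ltr_pdivrMr // -ec => h.
    have : Phat j <= c * (1 - a) * Q0 j by apply: ltW.
    rewrite -mulrA [(1 - a) * _]mulrC mulrA //.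
  have g := gap_lb Qj (Pge j) hP c1.
  have h := KL_lb Pge Q0pos sP sQ.
  rewrite (bigD1 j) //= in h.
  have h2 : 0 <= \sum_(i < n | i != j) (Num.sqrt (P i) - Num.sqrt (Q0 i)) ^+ 2.
    by apply: sumr_ge0 => i _; apply: sqr_ge0.
  lra.
set S := fun p => [set a : R | 0 <= a < 1 /\ rhsL n eps p a <= Dstar Phat Q0 a].
have eS : forall p, alphaL Phat Q0 eps p = sup (S p) by [].
have hasS : forall p, S p !=set0 -> has_sup (S p).
  move=> p ne; split => //; exists 1 => a [/andP[_ a1] _]; exact: ltW.
have part1 : forall p : R, 0 < p -> alphaL Phat Q0 eps p <= K.
  move=> p p0; rewrite eS.
  case: (pselect (S p !=set0)) => ne.
    apply: ge_sup => // a [/andP[a0 a1] h].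
    rewrite leNgt; apply/negP => Ka.
    have := Dzero a (ltW Ka) a1; have := rhs_pos p a p0 a0 a1; lra.
  have -> : S p = set0.
    by apply/seteqP; split => // x Hx; exfalso; apply: ne; exists x.
  by rewrite sup0.
have ge0 : forall p, 0 <= alphaL Phat Q0 eps p.
  move=> p; rewrite eS.
  case: (pselect (S p !=set0)) => ne.
    have [a Ha] := ne.
    apply: le_trans (sup_upper_bound (hasS p ne) Ha).
    by case: Ha => /andP[].
  have -> : S p = set0.
    by apply/seteqP; split => // x Hx; exfalso; apply: ne; exists x.
  by rewrite sup0.
split => //.
apply/cvgrPdist_lt => e ep.
have [Ke|Ke] := ltP (K - e) 0.
  exists 0; split => // p p0.
  have := part1 p p0; have := ge0 p.
  move=> h1 h2; rewrite ger0_norm; lra.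
set a := K - e / 2.
have a0 : 0 <= a by rewrite /a; lra.
have aK : a < K by rewrite /a; lra.
have a1 : a < 1 by lra.
have [d [d0 hd]] := Dpos a a0 aK.
have L0 : 0 <= ln (eps^-1) by apply: ln_ge0; rewrite invf_ge1 // ltW.
have N0 : 0 <= 2 * (n%:R : R) by apply: mulr_ge0; rewrite ?ler0n //; lra.
have [T [T0 hT]] := rhs_small _ _ _ L0 N0 d0.
have a10 : 0 < 1 - a by lra.
exists (T / (1 - a)); split; first by rewrite num_real.
move=> p Hp.
have Tp : T < p * (1 - a) by move: Hp; rewrite ltr_pdivrMr.
have p0 : 0 < p by have := pmulr_lgt0 _ a10; nra.
have Sa : S p a.
  split; first by apply/andP; split.
  apply: le_trans hd.
  exact: (hT _ (ltW Tp)).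
have := sup_upper_bound (hasS p (ex_intro _ a Sa)) Sa.
rewrite -eS => h.
have := part1 p p0.
move=> h2; rewrite ger0_norm; rewrite /a in h; lra.
Qed.
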